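(* Let $p$ be a prime, $V\in\mathbb{F}_p((X^{-1}))$ arbitrary, and $L\in\mathbb{F}_p((X^{-1}))$ irrational with continued fraction $[A_0;A_1,A_2,\ldots]$ and $d_h=\deg Q_h$. Let $m\in\mathbb{N}$ and $H\in\mathbb{N}$ with $d_H\le m<d_{H+1}$. Consider the point set of $p^m$ points in $[0,1)$ obtained from $\{k(X)L(X)+V(X)\}$ evaluated at $X=p$, where $k$ ranges over all polynomials in $\mathbb{F}_p[X]$ of degree $<m$. Then its star discrepancy satisfies $p^mD^*_{p^m}\le p^{\deg(A_{H+1}(L))}$.
   Context: Elements of $\mathbb{F}_p$ are identified with $\{0,\ldots,p-1\}$. For $M=\sum_{i=w}^\infty a_iX^{-i}$, $\{M\}=\sum_{i\ge\max(1,w)}a_iX^{-i}$, and if $\{M\}=\sum_{i\ge1}c_iX^{-i}$, its evaluation at $X=p$ is the real number $\sum_{i\ge1}c_ip^{-i}$. Irrational $L$ has unique continued fraction $[A_0;A_1,\ldots]$, $A_i\in\mathbb{F}_p[X]$, $\deg A_i\ge1$ for $i\ge1$; $A_{h}(L)=A_h$; convergents $P_h/Q_h=[A_0;\ldots,A_h]$ in lowest terms, $d_h=\deg Q_h=\sum_{i=1}^h\deg A_i$. For a point set $z_0,\ldots,z_{M-1}$ in $[0,1)$, $D_M^*=\sup_{0<\gamma\le1}|\#\{i:z_i<\gamma\}/M-\gamma|$. *)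

(* Defs.v *)
From Stdlib Require Import Reals ClassicalEpsilon.
From HB Require Import structures.
From mathcomp Require Import all_boot all_order all_algebra.

Set Implicit Arguments.
Unset Strict Implicit.
Unset Printing Implicit Defensive.

Import Order.TTheory GRing.Theory Num.Theory.

(* A Laurent series in X^{-1} over a field F is represented by its coefficient
   function  f : int -> F,  f n = coefficient of X^n, with only finitely many
   nonzero coefficients of positive degree. *)
Definition laurent (F : fieldType) (f : int -> F) : Prop :=
  exists N : int, forall n : int, (N < n)%O -> f n = 0%R.

Definition fracpart (F : fieldType) (f : int -> F) : int -> F :=
  fun n => if (n < (Posz 0))%O then f n else 0%R.

(* Coefficient of X^n in the product f*g, where f vanishes above degree N1
   and g vanishes above degree N2 (the sum ranges over all i <= N1 with
   n - i <= N2). *)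
Definition mulc (F : fieldType) (N1 N2 : int) (f g : int -> F) (n : int) : F :=
  (\sum_(k < (absz (N1 + N2 - n)%R).+1) f (N1 - Posz k)%R * g (n - N1 + Posz k)%R)%R.

Definition is_inv (F : fieldType) (f g : int -> F) : Prop :=
  exists N1 N2 : int,
    (forall n, (N1 < n)%O -> f n = 0%R) /\
    (forall n, (N2 < n)%O -> g n = 0%R) /\
    (forall n, mulc N1 N2 f g n = ((n == 0)%:R)%R).

Definition polymulc (F : fieldType) (Q : {poly F}) (f : int -> F) (n : int) : F :=
  (\sum_(j < size Q) (Q`_j)%R * f (n - Posz j)%R)%R.

Definition irrational (F : fieldType) (L : int -> F) : Prop :=
  ~ exists P Q : {poly F}, Q != 0%R /\
      forall n : int, polymulc Q L n = (if ((Posz 0) <= n)%O then (P`_(absz n))%R else 0%R).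

(* A = (A_0, A_1, ...) is the continued fraction expansion of L:
   complete quotients L_0 = L, A_i = polynomial part of L_i,
   (L_i - A_i) * L_{i+1} = 1, and deg A_i >= 1 for i >= 1. *)
Definition cont_frac (F : fieldType) (L : int -> F) (A : nat -> {poly F}) : Prop :=
  exists Lq : nat -> (int -> F),
    Lq 0%N = L /\
    forall i : nat,
      laurent (Lq i) /\
      (forall n : nat, ((A i)`_n)%R = Lq i (Posz n)) /\
      is_inv (fracpart (Lq i)) (Lq i.+1) /\
      ((0 < i)%N -> (1 < size (A i))%N).

(* Denominators of convergents: Q_{-1} = 0, Q_0 = 1,
   Q_h = A_h Q_{h-1} + Q_{h-2}.  cfQ2 A h = (Q_h, Q_{h+1}). *)
Fixpoint cfQ2 (F : fieldType) (A : nat -> {poly F}) (h : nat) : {poly F} * {poly F} :=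
  match h with
  | 0%N => (1%R, A 1%N)
  | h'.+1 => let (a, b) := cfQ2 A h' in (b, (A h'.+2 * b + a)%R)
  end.

Definition cfQ (F : fieldType) (A : nat -> {poly F}) (h : nat) : {poly F} :=
  (cfQ2 A h).1.

Definition cf_d (F : fieldType) (A : nat -> {poly F}) (h : nat) : nat :=
  (size (cfQ A h)).-1.

Definition Rltb (x y : R) : bool := if Rlt_dec x y then true else false.

(* evaluation at X = p of sum_{i>=1} c_i X^{-i}:  the real sum_{i>=1} c_i p^{-i}
   (c_i given as natural numbers in {0,...,p-1}). *)
Definition eval_at (p : nat) (c : nat -> nat) : R :=
  epsilon (inhabits R0)
    (fun x => infinite_sum (fun i => Rdiv (INR (c i.+1)) (pow (INR p) i.+1)) x).

(* The point attached to the polynomial k = sum_{j<m} kc_j X^j: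
   { k L + V } evaluated at X = p.  Elements of F_p are identified with
   {0,...,p-1} via nat_of_ord. *)
Definition point (p m : nat) (L V : int -> 'F_p) (kc : {ffun 'I_m -> 'F_p}) : R :=
  eval_at p (fun i => nat_of_ord
    ((\sum_(j < m) kc j * L (- (Posz i) - Posz (j : nat))%R + V (- (Posz i))%R)%R)).

Definition star_disc (I : finType) (z : I -> R) : R :=
  epsilon (inhabits R0)
    (fun s => is_lub (fun y => exists g : R, Rlt R0 g /\ Rle g R1 /\
        y = Rabs (Rminus (Rdiv (INR #|[pred i | Rltb (z i) g]|) (INR #|I|)) g)) s).

(* Main.v *)
Require Import Defs.
From Stdlib Require Import Reals.
From Stdlib Require Import ClassicalEpsilon Lra ZArith.
From mathcomp Require Import all_boot all_order all_algebra.
From mathcomp Require Import zify.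
Set Implicit Arguments. Unset Strict Implicit. Unset Printing Implicit Defensive.

Module Alg.
Import Order.TTheory GRing.Theory Num.Theory.
Local Open Scope ring_scope.

Definition zsum (F : fieldType) (lo : int) (c : nat) (G : int -> F) : F :=
  \sum_(t < c) G (lo + Posz t).

Lemma zsum_split (F : fieldType) lo c1 c2 (G : int -> F) :
  zsum lo (c1 + c2) G = zsum lo c1 G + zsum (lo + Posz c1) c2 G.
Proof.
rewrite /zsum big_split_ord /=; congr (_ + _).
by apply: eq_bigr => i _; rewrite PoszD addrA.
Qed.

Lemma zsum0 (F : fieldType) lo c (G : int -> F) :
  (forall x, (lo <= x)%O -> (x < lo + Posz c)%O -> G x = 0) -> zsum lo c G = 0.
Proof.
move=> H; rewrite /zsum big1 // => i _; have hi := ltn_ord i; apply: H; lia.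
Qed.

Lemma zsum_window (F : fieldType) lo c lo0 c0 (G : int -> F) :
  (forall x, G x != 0 -> (lo0 <= x)%O /\ (x < lo0 + Posz c0)%O) ->
  (lo <= lo0)%O -> (lo0 + Posz c0 <= lo + Posz c)%O ->
  zsum lo c G = zsum lo0 c0 G.
Proof.
move=> HG h1 h2.
set c1 := absz (lo0 - lo). set c2 := (c - c1 - c0)%N.
have -> : c = (c1 + (c0 + c2))%N by rewrite /c2 /c1; lia.
rewrite zsum_split zsum0; last first.
  move=> x hx1 hx2; apply/eqP; apply: contraT => /HG [h3 h4]; lia.
have -> : lo + Posz c1 = lo0 by rewrite /c1; lia.
rewrite add0r zsum_split [zsum (lo0 + _) _ _]zsum0 ?addr0 //.
move=> x hx1 hx2; apply/eqP; apply: contraT => /HG [h3 h4]; lia.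
Qed.

Lemma mulc_zsum (F : fieldType) (f g : int -> F) N1 N2 n lo c :
  (forall x, (N1 < x)%O -> f x = 0) -> (forall x, (N2 < x)%O -> g x = 0) ->
  (lo <= n - N2)%O -> (N1 < lo + Posz c)%O ->
  mulc N1 N2 f g n = zsum lo c (fun u => f u * g (n - u)).
Proof.
move=> Hf Hg h1 h2.
case: (boolP (n <= N1 + N2)%O) => hn; last first.
  rewrite /mulc big1; last by move=> k _; rewrite (Hg _) ?mulr0 //; lia.
  rewrite /zsum big1 // => t _.
  case: (boolP (lo + Posz t <= N1)%O) => ht.
    by rewrite (Hg _) ?mulr0 //; lia.
  by rewrite Hf ?mul0r //; lia.
rewrite (@zsum_window _ lo c (n - N2) (absz (N1 + N2 - n)%R).+1); last 3 first.
- move=> x; case: (boolP (x <= N1)%O) => hx1; last by rewrite Hf ?mul0r ?eqxx //; lia.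
  case: (boolP (n - x <= N2)%O) => hx2; last by rewrite (Hg (n - x)) ?mulr0 ?eqxx //; lia.
  move=> _; split; lia.
- done.
- lia.
rewrite /mulc /zsum (reindex_inj rev_ord_inj) /=; apply: eq_bigr => k _.
have hk := ltn_ord k.
congr (f _ * g _); lia.
Qed.

Lemma assoc_id (F : fieldType) (k : nat -> F) K (f g : int -> F) N1 N2
  (Hf : forall x, (N1 < x)%O -> f x = 0) (Hg : forall x, (N2 < x)%O -> g x = 0)
  (Hinv : forall n, mulc N1 N2 f g n = ((n == 0)%:R))
  n lo c (H1 : (lo <= n - N2)%O) (H2 : (N1 + Posz K <= lo + Posz c)%O) :
  zsum lo c (fun m => (\sum_(j < K) k j * f (m - Posz j)) * g (n - m))
  = \sum_(j < K) k j * ((n - Posz j == 0)%:R).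
Proof.
rewrite /zsum.
under eq_bigr do rewrite mulr_suml.
rewrite exchange_big /=; apply: eq_bigr => j _.
rewrite -(Hinv (n - Posz j)) (@mulc_zsum _ f g N1 N2 (n - Posz j) (lo - Posz j) c) //; last 2 first.
- lia.
- have := ltn_ord j; lia.
rewrite /zsum mulr_sumr; apply: eq_bigr => t _.
rewrite -mulrA; congr (_ * (f _ * g _)); lia.
Qed.

Definition Pk (F : fieldType) (L : int -> F) (D : nat) : Prop :=
  forall k : nat -> F, (forall j, (D <= j)%N -> k j = 0) ->
  (forall i, (0 < i <= D)%N -> \sum_(j < D) k j * L (- Posz i - Posz j) = 0) ->
  forall j, k j = 0.

Lemma kdelta_pos (F : fieldType) (k : nat -> F) K t :
  \sum_(j < K) k j * ((Posz t - Posz j == 0)%:R) = if (t < K)%N then k t else 0.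
Proof.
case: ifP => htK.
  rewrite (bigD1 (Ordinal htK)) //= subrr eqxx mulr1 big1 ?addr0 // => j hj.
  have : (Posz t - Posz j == 0) = false.
    apply/negbTE; move: hj; apply: contra => /eqP h.
    apply/eqP; apply: val_inj => /=; lia.
  by move=> ->; rewrite mulr0.
rewrite big1 // => j _; have := ltn_ord j => hj.
have : (Posz t - Posz j == 0) = false by apply/negbTE/eqP; lia.
by move=> ->; rewrite mulr0.
Qed.

Lemma kdelta_neg (F : fieldType) (k : nat -> F) K n :
  (n < 0)%O -> \sum_(j < K) k j * ((n - Posz j == 0)%:R) = 0.
Proof.
move=> hn; rewrite big1 // => j _.
have : (n - Posz j == 0) = false by apply/negbTE/eqP; lia.
by move=> ->; rewrite mulr0.
Qed.

Lemma sum_trunc (F : fieldType) (k : nat -> F) (X : nat -> F) D W :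
  (D <= W)%N -> (forall j, (D <= j)%N -> k j = 0) ->
  \sum_(j < W) k j * X j = \sum_(j < D) k j * X j.
Proof.
move=> hDW Hk; rewrite (big_ord_widen W (fun j => k j * X j) hDW) [RHS]big_mkcond.
apply: eq_bigr => i _; case: ifP => // /negbT; rewrite -leqNgt => h.
by rewrite Hk // mul0r.
Qed.

Lemma step (F : fieldType) (f0 g : int -> F) N1 N2
  (Hf : forall x, (N1 < x)%O -> f0 x = 0) (Hf0 : forall x, (0 <= x)%O -> f0 x = 0)
  (Hg : forall x, (N2 < x)%O -> g x = 0)
  (Hinv : forall n, mulc N1 N2 f0 g n = ((n == 0)%:R))
  (a : nat) (Hga : forall x, (Posz a < x)%O -> g x = 0) (Hgan : g (Posz a) != 0)
  D (IH : Pk g D) : Pk f0 (a + D).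
Proof.
move=> k Hk Hs.
set K := (a + D)%N.
pose km m := \sum_(j < K) k j * f0 (m - Posz j).
pose r t := km (Posz t).
have kmK : forall m, (Posz K <= m)%O -> km m = 0.
  move=> m hm; rewrite /km big1 // => j _; have := ltn_ord j => hj.
  by rewrite Hf0 ?mulr0 //; lia.
have kmneg : forall m, (- Posz K <= m)%O -> (m < 0)%O -> km m = 0.
  move=> m h1 h2.
  have := Hs (absz (- m)) ltac:(lia).
  have -> : - Posz (absz (- m)) = m by lia.
  by [].
have star : forall n, (- Posz D <= n)%O ->
   \sum_(t < K) r t * g (n - Posz t) = \sum_(j < K) k j * ((n - Posz j == 0)%:R).
  move=> n hn.
  rewrite -(@assoc_id _ k K f0 g N1 N2 Hf Hg Hinv n (- Posz K - Posz (absz N2))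
             (absz N2 + (K + (K + absz N1)))%N); last 2 first.
  - lia.
  - lia.
  rewrite zsum_split zsum0 ?add0r; last first.
    move=> x h1 h2; rewrite (Hga (n - x)) ?mulr0 //; lia.
  have -> : - Posz K - Posz (absz N2) + Posz (absz N2) = - Posz K by lia.
  rewrite zsum_split zsum0 ?add0r; last first.
    move=> x h1 h2; rewrite -/(km x) kmneg ?mul0r //; lia.
  have -> : - Posz K + Posz K = 0 by lia.
  rewrite zsum_split [zsum (0 + _) _ _]zsum0 ?addr0; last first.
    move=> x h1 h2; rewrite -/(km x) kmK ?mul0r //; lia.
  by rewrite /zsum; apply: eq_bigr => t _; rewrite add0r.
have ra : forall u t, (K <= t + u)%N -> (D <= t)%N -> r t = 0.
  elim=> [|u IHu] t h1 h2.
    by apply: kmK; lia.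
  case: (boolP (K <= t + u)%N) => h3; first exact: IHu.
  have htK : (t < K)%N by lia.
  have := star (Posz t + Posz a) ltac:(lia).
  rewrite -PoszD kdelta_pos.
  have -> : (t + a < K)%N = false by apply/negbTE; lia.
  rewrite (bigD1 (Ordinal htK)) //= big1 ?addr0; last first.
    move=> j hj.
    case: (ltngtP j t) => hjt.
    - by rewrite Hga ?mulr0 //; lia.
    - by rewrite IHu ?mul0r //; lia.
    - by move: hj; rewrite (_ : j = Ordinal htK) ?eqxx //; apply: val_inj.
  have -> : Posz (t + a) - Posz t = Posz a by lia.
  by move/eqP; rewrite mulf_eq0 (negbTE Hgan) orbF => /eqP.
have r0 : forall t, r t = 0.
  apply: (IH r).
    by move=> j hj; apply: (ra K) => //; lia.
  move=> i hi.
  have := star (- Posz i) ltac:(lia).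
  rewrite kdelta_neg; last by lia.
  rewrite (@sum_trunc _ r (fun t => g (- Posz i - Posz t)) D K) //; first by lia.
  by move=> j hj; apply: (ra K) => //; lia.
move=> j.
have := star (Posz j) ltac:(lia).
rewrite big1 => [|t _]; last by rewrite r0 mul0r.
rewrite kdelta_pos; case: ifP => hj; first by move/esym.
by move=> _; apply: Hk; lia.
Qed.

Definition ad (F : fieldType) (A : nat -> {poly F}) t := (size (A t)).-1.
Fixpoint Sd (F : fieldType) (A : nat -> {poly F}) i h : nat :=
  match h with 0%N => 0%N | h'.+1 => (ad A i.+1 + Sd A i.+1 h')%N end.

Lemma Pk_frac (F : fieldType) (L : int -> F) D : Pk (fracpart L) D -> Pk L D.
Proof.
move=> H k Hk Hs; apply: H => // i hi; rewrite -[RHS](Hs i hi).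
apply: eq_bigr => j _; rewrite /fracpart ifT //; lia.
Qed.

Lemma key (F : fieldType) (L : int -> F) A (HA : cont_frac L A) h :
  Pk L (Sd A 0 h).
Proof.
case: HA => Lq [HL0 HLq].
suff : forall h i, Pk (Lq i) (Sd A i h) by move=> /(_ h 0%N); rewrite HL0.
elim=> [|h' IH] i /=.
  by move=> k Hk _ j; apply: Hk.
apply: Pk_frac.
have [_ [_ [[N1 [N2 [Hf [Hg Hinv]]]] _]]] := HLq i.
have [_ [Hc1 [_ Hsz]]] := HLq i.+1.
have Hsz' := Hsz (ltn0Sn i).
apply: (step Hf _ Hg Hinv _ _ (IH i.+1)).
- by move=> x hx; rewrite /fracpart ifF //; apply/negbTE; lia.
- move=> x hx.
  have -> : x = Posz (absz x) by lia.
  rewrite -Hc1 nth_default //; rewrite /ad in hx; move: hx Hsz'; case: (size (A i.+1)) => [|s] /=; lia.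
- rewrite -Hc1.
  have -> : (A i.+1)`_(ad A i.+1) = lead_coef (A i.+1) by [].
  rewrite lead_coef_eq0 -size_poly_eq0; move: Hsz'; case: (size (A i.+1)) => [|s] /=; lia.
Qed.

Lemma Sd_succ (F : fieldType) (A : nat -> {poly F}) h i :
  Sd A i h.+1 = (Sd A i h + ad A (i + h.+1))%N.
Proof.
elim: h i => [|h IH] i; first by rewrite /= addn0 addn1.
change (ad A i.+1 + Sd A i.+1 h.+1 = (ad A i.+1 + Sd A i.+1 h) + ad A (i + h.+2))%N.
by rewrite IH addSnnS addnA.
Qed.

Lemma cfQ2_size (F : fieldType) (A : nat -> {poly F})
  (Hsz : forall t, (0 < t)%N -> (1 < size (A t))%N) h :
  size (cfQ2 A h).1 = (Sd A 0 h).+1 /\ size (cfQ2 A h).2 = (Sd A 0 h.+1).+1.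
Proof.
elim: h => [|h [IH1 IH2]].
  rewrite /= size_poly1 addn0; split => //.
  by have := Hsz 1%N isT; rewrite /ad; case: (size (A 1%N)).
rewrite /=; case E: (cfQ2 A h) => [q0 q1]; rewrite E in IH1 IH2.
change (size q0 = (Sd A 0 h).+1) in IH1.
change (size q1 = (Sd A 0 h.+1).+1) in IH2.
change (size q1 = (Sd A 0 h.+1).+1 /\ size (A h.+2 * q1 + q0) = (Sd A 0 h.+2).+1).
split => //.
have hA := Hsz h.+2 isT.
have ha : size (A h.+2) = (ad A h.+2).+1 by rewrite /ad; lia.
have nzA : A h.+2 != 0 by rewrite -size_poly_eq0; lia.
have nzq1 : q1 != 0 by rewrite -size_poly_eq0 IH2.
have e1 := @Sd_succ _ A h.+1 0. have e2 := @Sd_succ _ A h 0.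
rewrite add0n in e1 e2.
have hm : size (A h.+2 * q1) = (Sd A 0 h.+2).+1.
  rewrite size_mul // IH2 ha e1; lia.
rewrite size_addl hm //.
rewrite IH1 e1 e2; lia.
Qed.

Lemma cf_d_Sd (F : fieldType) (A : nat -> {poly F})
  (Hsz : forall t, (0 < t)%N -> (1 < size (A t))%N) h : cf_d A h = Sd A 0 h.
Proof. by rewrite /cf_d /cfQ (proj1 (cfQ2_size Hsz h)). Qed.
End Alg.


Module Rl.
Fixpoint enc (p : nat) (c : nat -> nat) (s : nat) : nat :=
  match s with 0 => 0%N | s'.+1 => (p * enc p c s' + c s'.+1)%N end.

Lemma enc_lt p c s : (forall i, (c i < p)%N) -> (enc p c s < p ^ s)%N.
Proof.
move=> hc; elim: s => [|s IH] /=; first by rewrite expn0.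
rewrite expnS; have := hc s.+1; nia.
Qed.

Lemma enc_ge p c s t : (enc p c s * p ^ t <= enc p c (s + t))%N.
Proof.
elim: t => [|t IH]; first by rewrite expn0 muln1 addn0.
rewrite (addnS s t) /= expnS; have := leq_mul (leqnn p) IH; nia.
Qed.

Lemma enc_le p c s t : (forall i, (c i < p)%N) ->
  (enc p c (s + t) + 1 <= (enc p c s + 1) * p ^ t)%N.
Proof.
move=> hc; elim: t => [|t IH]; first by rewrite expn0 muln1 addn0.
rewrite (addnS s t) /= expnS; have := hc (s + t).+1; have := leq_mul (leqnn p) IH; nia.
Qed.

Lemma enc_inj p c c' s : (forall i, (c i < p)%N) -> (forall i, (c' i < p)%N) ->
  enc p c s = enc p c' s -> forall i, (0 < i <= s)%N -> c i = c' i.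
Proof.
move=> hc hc'; elim: s => [|s IH] /= E i hi; first by lia.
have hp : (0 < p)%N by have := hc 0%N; lia.
have E1 : c s.+1 = c' s.+1.
  have := congr1 (modn^~ p) E; rewrite /= ![(p * _)%N]mulnC !modnMDl !modn_small //.
have E2 : enc p c s = enc p c' s.
  have := congr1 (divn^~ p) E; rewrite /= ![(p * _)%N]mulnC !divnMDl //.
  by rewrite !divn_small ?addn0.
case: (ltngtP i s.+1) => hi2; [apply: IH => //; lia | lia | by rewrite hi2].
Qed.

Local Open Scope R_scope.

Lemma INR_expn p s : INR (p ^ s) = INR p ^ s.
Proof. elim: s => [|s IH]; first by rewrite expn0. by rewrite expnS mult_INR IH. Qed.

Definition pre p c s := INR (enc p c s) / INR p ^ s.

Lemma psum_pre p c n : (0 < p)%N ->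
  sum_f_R0 (fun i => INR (c i.+1) / INR p ^ i.+1) n = pre p c n.+1.
Proof.
move=> hp; have hp' : INR p <> 0 by apply: not_0_INR; lia.
rewrite /pre; elim: n => [|n IH].
  by rewrite /= muln0 add0n.
rewrite [sum_f_R0 _ n.+1]/= IH.
have -> : enc p c n.+2 = (p * enc p c n.+1 + c n.+2)%N by [].
set e := enc p c n.+1; clearbody e.
rewrite plus_INR mult_INR -!tech_pow_Rmult.
field; split; auto; apply: pow_nonzero; auto.
Qed.

Lemma pre_bounds p c s t : (forall i, (c i < p)%N) ->
  INR (enc p c s) / INR p ^ s <= pre p c (s + t) <= (INR (enc p c s) + 1) / INR p ^ s.
Proof.
move=> hc; have hp : (0 < p)%N by have := hc 0%N; lia.
have hp' : 0 < INR p by apply: lt_0_INR; lia.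
have hps : 0 < INR p ^ s by apply: pow_lt.
have hpt : 0 < INR p ^ t by apply: pow_lt.
rewrite /pre pow_add.
have h1 := le_INR _ _ (leP (@enc_ge p c s t)).
have h2 := le_INR _ _ (leP (@enc_le p c s t hc)).
rewrite mult_INR INR_expn in h1.
rewrite plus_INR mult_INR plus_INR INR_expn /= in h2.
split.
- apply: (Rmult_le_reg_r (INR p ^ s * INR p ^ t)); first by apply: Rmult_lt_0_compat.
  have -> : INR (enc p c (s + t)) / (INR p ^ s * INR p ^ t) * (INR p ^ s * INR p ^ t) = INR (enc p c (s + t)) by field; lra.
  have -> : INR (enc p c s) / INR p ^ s * (INR p ^ s * INR p ^ t) = INR (enc p c s) * INR p ^ t by field; lra.
  lra.
- apply: (Rmult_le_reg_r (INR p ^ s * INR p ^ t)); first by apply: Rmult_lt_0_compat.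
  have -> : INR (enc p c (s + t)) / (INR p ^ s * INR p ^ t) * (INR p ^ s * INR p ^ t) = INR (enc p c (s + t)) by field; lra.
  have -> : (INR (enc p c s) + 1) / INR p ^ s * (INR p ^ s * INR p ^ t) = (INR (enc p c s) + 1) * INR p ^ t by field; lra.
  lra.
Qed.

Lemma lim_bounds (u : nat -> R) x lo hi N :
  Un_cv u x -> (forall n, (N <= n)%coq_nat -> lo <= u n <= hi) -> lo <= x <= hi.
Proof.
move=> hu hb; split; apply: Rnot_lt_le => hx.
- have [M hM] := hu (lo - x) ltac:(lra).
  have := hM (Nat.max M N) (Nat.le_max_l _ _).
  have := hb (Nat.max M N) (Nat.le_max_r _ _).
  rewrite /R_dist; move=> hb' hd; have := Rle_abs (u (Nat.max M N) - x).
  lra.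
- have [M hM] := hu (x - hi) ltac:(lra).
  have := hM (Nat.max M N) (Nat.le_max_l _ _).
  have := hb (Nat.max M N) (Nat.le_max_r _ _).
  rewrite /R_dist; move=> hb' hd; have := Rle_abs (x - u (Nat.max M N)).
  rewrite Rabs_minus_sym; lra.
Qed.

Lemma eval_bounds p c s : (forall i, (c i < p)%N) ->
  INR (enc p c s) / INR p ^ s <= eval_at p c <= (INR (enc p c s) + 1) / INR p ^ s.
Proof.
move=> hc; have hp : (0 < p)%N by have := hc 0%N; lia.
set f := fun i => INR (c i.+1) / INR p ^ i.+1.
have hg : Un_growing (fun n => sum_f_R0 f n).
  move=> n /=; rewrite /f; have : 0 <= INR (c n.+2) / INR p ^ n.+2.
    apply: Rmult_le_pos; first exact: pos_INR; apply: Rlt_le; apply: Rinv_0_lt_compat.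
    apply: pow_lt; apply: lt_0_INR; lia.
  lra.
have hb : has_ub (fun n => sum_f_R0 f n).
  exists 1 => y [n ->]; rewrite psum_pre //.
  have := proj2 (@pre_bounds p c 0 n.+1 hc); rewrite /= add0n.
  lra.
have ex : exists x, infinite_sum f x.
  by have [l hl] := @growing_cv _ hg hb; exists l.
have hx := epsilon_spec (inhabits R0) _ ex.
rewrite /eval_at -/f.
apply: (lim_bounds (N := s) hx) => n hn.
rewrite psum_pre //.
have -> : n.+1 = (s + (n.+1 - s))%N by apply/esym/subnKC; apply/leP; lia.
exact: pre_bounds.
Qed.
End Rl.


Module Cnt.
Import Order.TTheory GRing.Theory Num.Theory.
Local Open Scope ring_scope.

Definition emb (F : finFieldType) (m s : nat) (h : {ffun 'I_s -> F}) : {ffun 'I_m -> F} :=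
  [ffun i : 'I_m => (if (insub (val i) : option 'I_s) is Some j then h j else 0 : F)].
Definition tl (F : finFieldType) (m s : nat) (kc : {ffun 'I_m -> F}) : {ffun 'I_m -> F} :=
  [ffun i : 'I_m => (if (i < s)%N then 0 else kc i : F)].
Lemma ffunDE (F : finFieldType) m (f g : {ffun 'I_m -> F}) i : (f + g) i = f i + g i.
Proof. by rewrite !ffunE. Qed.

Definition Tails (F : finFieldType) (m s : nat) : {set {ffun 'I_m -> F}} :=
  [set t : {ffun 'I_m -> F} | [forall i : 'I_m, (i < s)%N ==> (t i == 0)]].

Lemma fiber_card (F : finFieldType) (m s n : nat) (hsm : (s <= m)%N)
  (hn : (#|F| ^ s)%N = n)
  (Phi : {ffun 'I_m -> F} -> 'I_n)
  (INJ : forall kc kc' : {ffun 'I_m -> F}, (forall i : 'I_m, (s <= i)%N -> kc i = kc' i) ->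
          Phi kc = Phi kc' -> kc = kc') (N : 'I_n) :
  #|[set kc | Phi kc == N]| = #|Tails F m s|.
Proof.
have embhi : forall (h : {ffun 'I_s -> F}) (i : 'I_m), (s <= i)%N -> emb m h i = 0.
  move=> h i hi; rewrite /emb ffunE insubF //; apply/negbTE; by rewrite -leqNgt.
rewrite -(@card_in_imset _ _ (@tl F m s)); last first.
  move=> kc kc'; rewrite !inE => /eqP h1 /eqP h2 E; apply: INJ; last by rewrite h1 h2.
  move=> i hi; have := congr1 (fun f : {ffun 'I_m -> F} => f i) E; rewrite /= /tl !ffunE.
  by have -> : (i < s)%N = false by apply/negbTE; lia.
apply: eq_card => t; apply/idP/idP.
  move/imsetP => [kc _ ->]; rewrite inE; apply/forallP => i; apply/implyP => hi.
  by rewrite /tl ffunE hi.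
rewrite inE => /forallP ht.
pose psi (h : {ffun 'I_s -> F}) := Phi (emb m h + t).
have psi_inj : injective psi.
  move=> h h' E.
  have E2 : emb m h + t = emb m h' + t.
    apply: INJ => // i hi; rewrite !ffunDE !embhi //.
  have E3 : emb m h = emb m h' by apply: (addIr t).
  apply/ffunP => j; have := congr1 (fun f : {ffun 'I_m -> F} => f (widen_ord hsm j)) E3.
  by rewrite /= /emb !ffunE /= valK.
have := @inj_card_onto _ _ psi psi_inj _ N.
rewrite card_ord card_ffun card_ord hn leqnn => /(_ isT) /codomP [h Eh].
apply/imsetP; exists (emb m h + t); first by rewrite inE Eh /psi.
apply/ffunP => i; rewrite /tl ffunE ffunDE; case: ifP => hi.
  by have := implyP (ht i) hi => /eqP ->.
by rewrite embhi ?add0r //; lia.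
Qed.

Lemma total_card (F : finFieldType) (m s n : nat) (Phi : {ffun 'I_m -> F} -> 'I_n)
  T (hT : forall N, #|[set kc | Phi kc == N]| = T) j : (j <= n)%N ->
  #|[set kc | (Phi kc < j)%N]| = (j * T)%N.
Proof.
move=> hj.
rewrite -sum1_card (partition_big Phi (fun N : 'I_n => (N < j)%N)); last by move=> kc; rewrite inE.
rewrite (eq_bigr (fun _ => T)); last first.
  move=> N hN; rewrite -(hT N) -sum1_card; apply: eq_bigl => kc; rewrite !inE.
  by case: (Phi kc =P N) => [->|_]; rewrite ?hN ?andbF ?andbT //.
rewrite -(big_ord_widen n (fun _ => T) hj) sum_nat_const card_ord //.
Qed.

Lemma all_card (F : finFieldType) (m s n : nat) (Phi : {ffun 'I_m -> F} -> 'I_n)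
  T (hT : forall N, #|[set kc | Phi kc == N]| = T) :
  #|{ffun 'I_m -> F}| = (n * T)%N.
Proof.
have := @total_card F m s n Phi T hT n (leqnn n).
move=> <-; apply: eq_card => kc; by rewrite !inE ltn_ord.
Qed.
End Cnt.


Lemma exists_floor (x : R) : Rlt R0 x -> exists j : nat, Rlt (INR j) x /\ Rle x (Rplus (INR j) R1).
Proof.
move=> hx; have [h1 h2] := archimed (Ropp x).
have hz : Z.lt (up (Ropp x)) 1 by apply: lt_IZR; lra.
exists (Z.to_nat (Z.opp (up (Ropp x)))); rewrite INR_IZR_INZ Z2Nat.id; last by lia.
rewrite opp_IZR; split; lra.
Qed.

Lemma RltbP x y : Rltb x y = true <-> Rlt x y.
Proof. by rewrite /Rltb; case: Rlt_dec => h; split. Qed.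

Definition cdig (p m : nat) (L V : int -> 'F_p) (kc : {ffun 'I_m -> 'F_p}) (i : nat) : nat :=
  nat_of_ord ((\sum_(j < m) kc j * L (- (Posz i) - Posz (j : nat))%R + V (- (Posz i))%R)%R).

Lemma point_cdig p m L V kc : @point p m L V kc = eval_at p (@cdig p m L V kc).
Proof. by []. Qed.

Lemma Fp_lt p (x : 'F_p) : prime p -> (nat_of_ord x < p)%N.
Proof. by move=> hp; case: x => /= x hx; rewrite -(Fp_cast hp). Qed.

Lemma cdig_lt p m L V kc i : prime p -> (@cdig p m L V kc i < p)%N.
Proof. by move=> hp; apply: Fp_lt. Qed.

Lemma digit_inj p m (L V : int -> 'F_p) s (hp : prime p) (hsm : (s <= m)%N)
  (HP : Alg.Pk L s) (kc kc' : {ffun 'I_m -> 'F_p}) :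
  (forall i : 'I_m, (s <= i)%N -> kc i = kc' i) ->
  Rl.enc p (@cdig p m L V kc) s = Rl.enc p (@cdig p m L V kc') s -> kc = kc'.
Proof.
move=> Hhi E.
have Ed := @Rl.enc_inj p _ _ s (fun i => cdig_lt L V kc i hp) (fun i => cdig_lt L V kc' i hp) E.
pose k n := if (insub n : option 'I_m) is Some j then (kc j - kc' j)%R else 0%R.
have Hk : forall n, (s <= n)%N -> k n = 0%R.
  move=> n hn; rewrite /k; case: insubP => [j _ hj|_] //.
  by rewrite Hhi ?GRing.subrr // hj.
have kval : forall j : 'I_m, k j = (kc j - kc' j)%R by move=> j; rewrite /k valK.
apply/ffunP => j; apply/eqP; rewrite -GRing.subr_eq0 -kval; apply/eqP.
apply: (HP k Hk) => i hi.
rewrite -(@Alg.sum_trunc _ k (fun j => L (- Posz i - Posz j)%R) s m hsm Hk).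
under eq_bigr do rewrite kval GRing.mulrBl.
rewrite GRing.sumrB; apply/eqP; rewrite GRing.subr_eq0; apply/eqP.
have := Ed i hi; rewrite /cdig => /ord_inj; exact: GRing.addIr.
Qed.

Lemma disc_core (P t c g j : R) : Rlt 0 P -> Rlt 0 t ->
  Rle (Rmult j t) c -> Rle c (Rmult (Rplus j R1) t) ->
  Rlt j (Rmult g P) -> Rle (Rmult g P) (Rplus j R1) ->
  Rle (Rabs (Rminus (Rdiv c (Rmult P t)) g)) (Rdiv R1 P).
Proof.
move=> hP ht h1 h2 h3 h4.
have hq1 : Rle j (Rdiv c t).
  apply: (Rmult_le_reg_r t) => //; rewrite /Rdiv Rmult_assoc Rinv_l; lra.
have hq2 : Rle (Rdiv c t) (Rplus j R1).
  apply: (Rmult_le_reg_r t) => //; rewrite /Rdiv Rmult_assoc Rinv_l; lra.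
have -> : Rdiv c (Rmult P t) = Rdiv (Rdiv c t) P by field; lra.
set q := Rdiv c t.
have e1 : Rmult (Rminus (Rdiv q P) g) P = Rminus q (Rmult g P) by field; lra.
have e2 : Rmult (Rdiv R1 P) P = R1 by field; lra.
have e3 : Rmult (Ropp (Rdiv R1 P)) P = Ropp R1 by field; lra.
apply: Rabs_le; split; apply: (Rmult_le_reg_r P) => //; rewrite ?e1 ?e2 ?e3. all: rewrite /q; lra.
Qed.

Theorem lemma5 (p : nat) (Hp : prime p) (L V : int -> 'F_p)
  (HL : laurent L) (HV : laurent V) (Hirr : irrational L)
  (A : nat -> {poly 'F_p}) (HA : cont_frac L A)
  (m H : nat) (HmH : (cf_d A H <= m < cf_d A H.+1)%N) :
  Rle (Rmult (INR (p ^ m)) (star_disc (@point p m L V))) (pow (INR p) (size (A H.+1)).-1).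
Proof.
have hp1 : (1 < p)%N := prime_gt1 Hp.
have Hsz : forall t, (0 < t)%N -> (1 < size (A t))%N.
  by case: HA => Lq [_ HLq] t ht; exact: (proj2 (proj2 (proj2 (HLq t))) ht).
set s := cf_d A H.
have Hs : s = Alg.Sd A 0 H := Alg.cf_d_Sd Hsz H.
have HP : Alg.Pk L s by rewrite Hs; exact: Alg.key HA H.
set a := (size (A H.+1)).-1.
have Hs1 : cf_d A H.+1 = (s + a)%N by rewrite Hs !(Alg.cf_d_Sd Hsz) Alg.Sd_succ add0n.
move: HmH; rewrite Hs1 => /andP [hsm hma].
have hps : (0 < p ^ s)%N by rewrite expn_gt0; apply/orP; left; lia.
pose Phi kc : 'I_(p ^ s) :=
  Ordinal (@Rl.enc_lt p (@cdig p m L V kc) s (fun i => cdig_lt L V kc i Hp)).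
have INJ : forall kc kc' : {ffun 'I_m -> 'F_p},
    (forall i : 'I_m, (s <= i)%N -> kc i = kc' i) -> Phi kc = Phi kc' -> kc = kc'.
  move=> kc kc' h1 h2; apply: (@digit_inj p m L V s Hp hsm HP kc kc' h1).
  exact: (congr1 val h2).
have hn : (#|'F_p| ^ s)%N = (p ^ s)%N by rewrite (card_Fp Hp).
set T := #|Cnt.Tails 'F_p m s|.
have hT : forall N, #|[set kc | Phi kc == N]| = T := Cnt.fiber_card hsm hn INJ.
have hall := @Cnt.all_card 'F_p m s _ Phi T hT.
have hcard : #|{ffun 'I_m -> 'F_p}| = (p ^ m)%N by rewrite card_ffun !card_ord (Fp_cast Hp).
have hpm : (p ^ m = p ^ s * T)%N by rewrite -hcard hall.
have hTpos : (0 < T)%N.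
  have : (0 < p ^ m)%N by rewrite expn_gt0; apply/orP; left; lia.
  by rewrite hpm muln_gt0 => /andP [_ ->].
set z := @point p m L V.
have hP : Rlt R0 (INR p ^ s) by apply: pow_lt; apply: lt_0_INR; apply/ltP; lia.
have zb : forall kc, Rle (Rdiv (INR (Phi kc)) (INR p ^ s)) (z kc) /\
                     Rle (z kc) (Rdiv (Rplus (INR (Phi kc)) R1) (INR p ^ s)).
  move=> kc; rewrite /z point_cdig; exact: (Rl.eval_bounds s (fun i => cdig_lt L V kc i Hp)).
have key : forall g, Rlt R0 g -> Rle g R1 ->
   Rle (Rabs (Rminus (Rdiv (INR #|[pred i | Rltb (z i) g]|) (INR #|{ffun 'I_m -> 'F_p}|)) g))
       (Rdiv R1 (INR p ^ s)).
  move=> g hg0 hg1.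
  have [j [hj1 hj2]] := exists_floor (Rmult_lt_0_compat _ _ hg0 hP).
  have hjps : (j < p ^ s)%N.
    apply/ltP; apply: INR_lt; rewrite Rl.INR_expn.
    have : Rle (Rmult g (INR p ^ s)) (INR p ^ s).
      rewrite -{2}(Rmult_1_l (INR p ^ s)); apply: Rmult_le_compat_r; lra.
    lra.
  set C := #|[pred i | Rltb (z i) g]|.
  have low : (j * T <= C)%N.
    rewrite -(@Cnt.total_card _ m s _ Phi T hT j (ltnW hjps)); apply: subset_leq_card; apply/subsetP => kc.
    rewrite !inE => hk; apply/RltbP.
    have hk' : Rle (Rplus (INR (Phi kc)) R1) (INR j).
      rewrite -S_INR; apply: le_INR; apply/leP; exact: hk.
    have [_ zb2] := zb kc.
    have : Rle (Rdiv (Rplus (INR (Phi kc)) R1) (INR p ^ s)) (Rdiv (INR j) (INR p ^ s)).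
      apply: Rmult_le_compat_r => //; apply: Rlt_le; apply: Rinv_0_lt_compat => //.
    have : Rlt (Rdiv (INR j) (INR p ^ s)) g.
      apply: (Rmult_lt_reg_r (INR p ^ s)) => //; rewrite /Rdiv Rmult_assoc Rinv_l; lra.
    lra.
  have upp : (C <= j.+1 * T)%N.
    rewrite -(@Cnt.total_card _ m s _ Phi T hT j.+1 hjps); apply: subset_leq_card; apply/subsetP => kc.
    rewrite !inE => /RltbP hk.
    have [zb1 _] := zb kc.
    have h1 : Rlt (Rdiv (INR (Phi kc)) (INR p ^ s)) g by lra.
    have h2 : Rlt (INR (Phi kc)) (Rmult g (INR p ^ s)).
      apply: (Rmult_lt_reg_r (Rinv (INR p ^ s))); first by apply: Rinv_0_lt_compat.
      rewrite Rmult_assoc Rinv_r ?Rmult_1_r; [exact: h1 | lra].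
    have : Rlt (INR (Phi kc)) (INR j.+1) by rewrite S_INR; lra.
    by move/INR_lt/ltP.
  rewrite hcard hpm mult_INR Rl.INR_expn.
  apply: (@disc_core _ (INR T) (INR C) g (INR j)) => //.
  - by apply: lt_0_INR; apply/ltP.
  - by rewrite -mult_INR; apply: le_INR; apply/leP.
  - have e : Rplus (INR j) R1 = INR j.+1 by rewrite S_INR.
    by rewrite e -mult_INR; apply: le_INR; apply/leP.
have hD : Rle (star_disc z) (Rdiv R1 (INR p ^ s)).
  rewrite /star_disc.
  match goal with |- Rle (epsilon _ (fun s0 => is_lub ?E s0)) _ =>
    have ub : forall y, E y -> Rle y (Rdiv R1 (INR p ^ s));
    [ by move=> y [g [h1 [h2 ->]]]; exact: key
    | have hex : exists x, is_lub E x;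
      [ have [l hl] := completeness E (ex_intro _ _ ub) (ex_intro _ _ (ex_intro _ R1 (conj Rlt_0_1 (conj (Rle_refl R1) erefl))));
        by exists l
      | have hlub := epsilon_spec (inhabits R0) _ hex;
        exact: (proj2 hlub _ ub) ] ]
  end.
have hms : (p ^ m = p ^ s * p ^ (m - s))%N by rewrite -expnD subnKC.
have hX : Rle (INR (p ^ (m - s))) (INR p ^ a).
  rewrite -Rl.INR_expn; apply: le_INR; apply/leP; apply: leq_pexp2l; lia.
rewrite hms mult_INR Rl.INR_expn.
apply: (Rle_trans _ (Rmult (Rmult (INR p ^ s) (INR (p ^ (m - s)))) (Rdiv R1 (INR p ^ s)))).
  apply: Rmult_le_compat_l => //; apply: Rmult_le_pos; [lra | exact: pos_INR].
have -> : Rmult (Rmult (INR p ^ s) (INR (p ^ (m - s)))) (Rdiv R1 (INR p ^ s)) = INR (p ^ (m - s)) by field; lra.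
exact: hX.
Qed.
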